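(* Let $x$ be a real number with $\sin(2x)\neq 0$. Define $r_n(x)=\frac{(-1)^n x^{2n+1}}{(2n+1)!}$ for $n\ge 0$, $p_0(x)=q_0(x)=0$, and for $n\ge 1$ $$p_n(x)=p_{n-1}(x)+r_{n-1}(x),\qquad q_n(x)=q_{n-1}(x)+2^{2n-1}r_{n-1}(x).$$ Then $q_n(x)\neq 0$ for all sufficiently large $n$ and $$\tan(x)=\lim_{n\to\infty}\frac{2p_n^2(x)}{q_n(x)}.$$ *)

(* Defs.v *)
From Stdlib Require Import Reals Factorial.
Open Scope R_scope.

Definition r (n : nat) (x : R) : R :=
  (-1) ^ n * x ^ (2 * n + 1) / INR (fact (2 * n + 1)).

Fixpoint p (n : nat) (x : R) : R :=
  match n with
  | O => 0
  | S m => p m x + r m x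
  end.

(* q_0 = 0, q_n = q_{n-1} + 2^(2n-1) r_{n-1}; for n = m+1, 2n-1 = 2m+1 *)
Fixpoint q (n : nat) (x : R) : R :=
  match n with
  | O => 0
  | S m => q m x + 2 ^ (2 * m + 1) * r m x
  end.

(* Main.v *)
Require Import Defs.
From Stdlib Require Import Reals.
From Stdlib Require Import Lra Lia Cos_rel.
Open Scope R_scope.

Lemma p_B1 (x : R) (n : nat) : p (S n) x = B1 x n.
Proof.
  induction n as [|n IH].
  - unfold B1; simpl sum_f_R0; change (p 1 x) with (0 + r 0 x); unfold r; simpl; field.
  - change (p (S (S n)) x) with (p (S n) x + r (S n) x).
    rewrite IH; unfold B1; rewrite tech5; unfold r; unfold Rdiv; ring.
Qed.

Lemma q_B1 (x : R) (n : nat) : q (S n) x = B1 (2 * x) n.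
Proof.
  induction n as [|n IH].
  - unfold B1; simpl sum_f_R0; change (q 1 x) with (0 + 2 ^ (2 * 0 + 1) * r 0 x); unfold r; simpl; field.
  - change (q (S (S n)) x) with (q (S n) x + 2 ^ (2 * S n + 1) * r (S n) x).
    rewrite IH; unfold B1; rewrite tech5; unfold r;
    rewrite (Rpow_mult_distr 2 x); unfold Rdiv; ring.
Qed.

Lemma cv_shift (u : nat -> R) (l : R) :
  Un_cv (fun n => u (S n)) l -> Un_cv u l.
Proof.
  intros H eps He. destruct (H eps He) as [N HN]. exists (S N).
  intros n Hn. destruct n as [|m]; [lia|]. apply HN. lia.
Qed.

Theorem mainTheorem7 (x : R) (hx : sin (2 * x) <> 0) :
  (exists N : nat, forall n : nat, (N <= n)%nat -> q n x <> 0) /\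
  Un_cv (fun n : nat => 2 * (p n x) ^ 2 / q n x) (tan x).
Proof.
  assert (Hq : Un_cv (fun n => q (S n) x) (sin (2 * x))).
  { intros e He. destruct (B1_cvg (2 * x) e He) as [N HN]. exists N.
    intros n Hn. rewrite q_B1. apply HN; auto. }
  assert (Hp : Un_cv (fun n => p (S n) x) (sin x)).
  { intros e He. destruct (B1_cvg x e He) as [N HN]. exists N.
    intros n Hn. rewrite p_B1. apply HN; auto. }
  split.
  - assert (Ha : 0 < Rabs (sin (2 * x))) by (apply Rabs_pos_lt; auto).
    destruct (Hq _ Ha) as [N HN]. exists (S N). intros n Hn Hz.
    destruct n as [|m]; [lia|]. assert (HH := HN m ltac:(lia)).
    unfold Rdist in HH. rewrite Hz in HH.
    replace (0 - sin (2 * x)) with (- sin (2 * x)) in HH by ring.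
    rewrite Rabs_Ropp in HH. lra.
  - apply cv_shift.
    assert (Hinv : Un_cv (fun n => / q (S n) x) (/ sin (2 * x))).
    { pose proof (continuity_seq (fun y => / y) (fun n => q (S n) x) (sin (2 * x))) as C.
      apply C; auto.
      apply (continuity_pt_inv (fun y => y)); auto. apply derivable_continuous_pt; apply derivable_pt_id. }
    pose proof (CV_mult _ _ _ _ Hp Hp) as H2.
    pose proof (CV_mult _ _ _ _ H2 Hinv) as H3.
    assert (Hc : cos x <> 0 /\ sin x <> 0).
    { rewrite sin_2a in hx. split; intro Z; apply hx; rewrite Z; ring. }
    replace (tan x) with (2 * (sin x * sin x * / sin (2 * x))).
    2:{ unfold tan. rewrite sin_2a. field. tauto. }
    intros e He. destruct (H3 (e / 2)) as [N HN]; [lra|]. exists N.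
    intros n Hn. specialize (HN n Hn). unfold Rdist in *.
    replace (2 * p (S n) x ^ 2 / q (S n) x - 2 * (sin x * sin x * / sin (2 * x)))
      with (2 * (p (S n) x * p (S n) x * / q (S n) x - sin x * sin x * / sin (2 * x)))
      by (unfold Rdiv; ring).
    rewrite Rabs_mult, Rabs_right by lra. lra.
Qed.
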